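(* Let $\Sigma_2=\{1,2\}^{\mathbb{Z}}$ with the infinite product topology, let $T\colon\Sigma_2\to\Sigma_2$ be the shift $T[(x_n)_{n\in\mathbb{Z}}]=(x_{n+1})_{n\in\mathbb{Z}}$, and let $d$ be any metric on $\Sigma_2$ which generates the product topology. Then there exist functions $f,g\colon\Sigma_2\to(0,1]$ and $\phi\colon\Sigma_2\to\mathbb{R}$, all Lipschitz continuous with respect to $d$, such that the function $A\colon\Sigma_2\to\mathrm{GL}_2(\mathbb{R})$, \[A(x):=\begin{pmatrix}f(x)&\phi(x)\\0&g(x)\end{pmatrix},\] satisfies \[\lim_{n\to\infty}\sup_{x\in\Sigma_2}\|A(T^{n-1}x)\cdots A(x)\|^{1/n}=1,\qquad \lim_{n\to\infty}\frac1n\sup_{x\in\Sigma_2}\|A(T^{n-1}x)\cdots A(x)\|=0,\] and \[\sup_{n\ge1}\sup_{x\in\Sigma_2}\|A(T^{n-1}x)\cdots A(x)\|=\infty.\]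
   Context: $\|\cdot\|$ is the Euclidean operator norm on $2\times 2$ real matrices. *)

(* Defs.v *)
From HB Require Import structures.
From mathcomp Require Import all_boot all_order all_algebra.
From mathcomp Require Import all_classical all_reals all_analysis.
Set Implicit Arguments. Unset Strict Implicit. Unset Printing Implicit Defensive.
Import Order.TTheory GRing.Theory Num.Theory.
Local Open Scope classical_set_scope.
Local Open Scope ring_scope.

(* Sigma_2 = {1,2}^Z, symbols encoded as booleans. *)
Definition Sigma2 := int -> bool.

Definition shift (x : Sigma2) : Sigma2 := fun k => x (k + 1)%R.

Definition prod_open (U : set Sigma2) : Prop :=
  forall x, U x -> exists N : nat,
    forall y : Sigma2, (forall k : int, `|k| <= N%:Z -> y k = x k) -> U y.

Definition is_metric (R : realType) (d : Sigma2 -> Sigma2 -> R) : Prop :=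
  (forall x y, 0 <= d x y) /\
  (forall x y, d x y = 0 <-> x = y) /\
  (forall x y, d x y = d y x) /\
  (forall x y z, d x z <= d x y + d y z).

Definition metric_open (R : realType) (d : Sigma2 -> Sigma2 -> R)
  (U : set Sigma2) : Prop :=
  forall x, U x -> exists2 e : R, 0 < e & forall y, d x y < e -> U y.

Definition generates_product_topology (R : realType)
  (d : Sigma2 -> Sigma2 -> R) : Prop :=
  is_metric d /\ (forall U, metric_open d U <-> prod_open U).

Definition lipschitz_wrt (R : realType) (d : Sigma2 -> Sigma2 -> R)
  (h : Sigma2 -> R) : Prop :=
  exists L : R, forall x y, `|h x - h y| <= L * d x y.

Definition vnorm2 (R : realType) (v : 'cV[R]_2) : R :=
  Num.sqrt (\sum_(i < 2) v i 0 ^+ 2).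

Definition opnorm (R : realType) (M : 'M[R]_2) : R :=
  sup [set vnorm2 (M *m v) | v in [set v : 'cV[R]_2 | vnorm2 v <= 1]].

Definition Amat (R : realType) (f g phi : Sigma2 -> R) (x : Sigma2) : 'M[R]_2 :=
  \matrix_(i < 2, j < 2)
    if (i == 0 :> nat) then (if (j == 0 :> nat) then f x else phi x)
    else (if (j == 0 :> nat) then 0 else g x).

Fixpoint Aprod (R : realType) (A : Sigma2 -> 'M[R]_2) (n : nat) (x : Sigma2)
  : 'M[R]_2 :=
  match n with
  | 0%N => 1%:M
  | m.+1 => A (iter m shift x) *m Aprod A m x
  end.

(* Main.v *)
Require Import Defs.
From HB Require Import structures.
From mathcomp Require Import all_boot all_order all_algebra.
From mathcomp Require Import all_classical all_reals all_analysis.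
From mathcomp Require Import ring lra zify.
Import Order.TTheory GRing.Theory Num.Theory.
Local Open Scope classical_set_scope.
Local Open Scope ring_scope.

Set Implicit Arguments. Unset Strict Implicit.


Section S.
Variable R : realType.

Lemma cvg_sandwich (u : nat -> \bar R) (l : R) :
  (forall e : R, 0 < e -> exists N, forall n, (N <= n)%N ->
     ((l - e)%:E <= u n)%E /\ (u n <= (l + e)%:E)%E) -> u @ \oo --> l%:E.
Proof.
move=> H; apply/fine_cvgP; split.
  have [N HN] := H 1 ltr01.
  exists N => // n /= /HN [h1 h2].
  by rewrite fin_numElt (lt_le_trans _ h1) ?ltNyr // (le_lt_trans h2) ?ltry.
apply/cvgrPdist_le => e e0.
have [N HN] := H e e0.
exists N => // n /= /HN [h1 h2].
have fn : u n \is a fin_num.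
  by rewrite fin_numElt (lt_le_trans _ h1) ?ltNyr // (le_lt_trans h2) ?ltry.
move: h1 h2; rewrite -(fineK fn) !lee_fin => h1 h2.
rewrite ler_norml; apply/andP; split; lra.
Qed.
End S.


Section S.
Variable R : realType.

Lemma sum2E (F : 'I_2 -> R) : \sum_(i < 2) F i = F 0 + F 1.
Proof.
rewrite big_ord_recr big_ord_recr big_ord0 /= add0r.
by congr (F _ + F _); apply/val_inj.
Qed.

Lemma vnorm2E (v : 'cV[R]_2) : vnorm2 v = Num.sqrt (v 0 0 ^+ 2 + v 1 0 ^+ 2).
Proof. by rewrite /vnorm2 sum2E. Qed.

Lemma sqrt_le_abs (a b : R) : Num.sqrt (a ^+ 2 + b ^+ 2) <= `|a| + `|b|.
Proof.
rewrite -(ger0_norm (addr_ge0 (normr_ge0 a) (normr_ge0 b))).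
rewrite -sqrtr_sqr ler_sqrt ?sqr_ge0 //.
rewrite sqrrD !real_normK ?num_real // -addrA lerD2l lerDr mulrn_wge0 // mulr_ge0 //.
Qed.

Lemma sqrt_ge_abs (a b : R) : `|a| <= Num.sqrt (a ^+ 2 + b ^+ 2).
Proof.
rewrite -sqrtr_sqr ler_sqrt ?addr_ge0 ?sqr_ge0 //.
rewrite lerDl sqr_ge0 //.
Qed.

Lemma mulmx_col (M : 'M[R]_2) (v : 'cV[R]_2) i :
  (M *m v) i 0 = M i 0 * v 0 0 + M i 1 * v 1 0.
Proof. by rewrite mxE sum2E. Qed.

Lemma vnorm2_le1 (v : 'cV[R]_2) i : vnorm2 v <= 1 -> `|v i 0| <= 1.
Proof.
move=> h; apply: le_trans h.
rewrite vnorm2E.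
have : i = 0 \/ i = 1.
  case: i => [[|[|//]] ?]; [left|right]; exact/val_inj.
case=> ->; first exact: sqrt_ge_abs.
by rewrite addrC sqrt_ge_abs.
Qed.

End S.


Section S.
Variable R : realType.

Definition mxsum (M : 'M[R]_2) := `|M 0 0| + `|M 0 1| + `|M 1 0| + `|M 1 1|.

Lemma opnorm_ubound (M : 'M[R]_2) :
  ubound [set vnorm2 (M *m v) | v in [set v : 'cV[R]_2 | vnorm2 v <= 1]] (mxsum M).
Proof.
move=> _ [v /= hv <-].
have h0 := vnorm2_le1 0 hv; have h1 := vnorm2_le1 1 hv.
rewrite vnorm2E (le_trans (sqrt_le_abs _ _)) // !mulmx_col /mxsum.
have H : forall (a b c d : R), `|a| <= 1 -> `|b| <= 1 ->
    `|c * a + d * b| <= `|c| + `|d|.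
  move=> a b c d ha hb; rewrite (le_trans (ler_normD _ _)) // !normrM.
  by rewrite lerD // ler_piMr.
by rewrite -[X in _ <= X]addrA lerD // H.
Qed.

Lemma opnorm_has_sup (M : 'M[R]_2) :
  has_sup [set vnorm2 (M *m v) | v in [set v : 'cV[R]_2 | vnorm2 v <= 1]].
Proof.
split; last by exists (mxsum M); exact: opnorm_ubound.
exists (vnorm2 (M *m 0)), 0 => //=.
by rewrite vnorm2E !mxE expr0n /= addr0 sqrtr0.
Qed.

Lemma opnorm_le (M : 'M[R]_2) : opnorm M <= mxsum M.
Proof. by apply: ge_sup; [case: (opnorm_has_sup M)|exact: opnorm_ubound]. Qed.

Lemma opnorm_ge (M : 'M[R]_2) (j : 'I_2) : `|M 0 j| <= opnorm M.
Proof.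
pose e : 'cV[R]_2 := \matrix_(i < 2, k < 1) (if i == j then 1 else 0).
have ve : vnorm2 e <= 1.
  rewrite vnorm2E !mxE.
  have : j = 0 \/ j = 1.
    case: j {e} => [[|[|//]] ?]; [left|right]; exact/val_inj.
  by case=> -> /=; rewrite ?expr0n ?expr1n /= ?addr0 ?add0r sqrtr1.
apply: le_trans (sup_upper_bound (opnorm_has_sup M) _); last first.
  by exists e.
rewrite vnorm2E !mulmx_col !mxE.
have : j = 0 \/ j = 1.
  case: j {e ve} => [[|[|//]] ?]; [left|right]; exact/val_inj.
case=> -> /=; rewrite !mulr1 !mulr0 ?addr0 ?add0r; exact: sqrt_ge_abs.
Qed.

End S.


Section S.
Variable R : realType.
Variable e : Sigma2 -> R.

Fixpoint Pp n (x : Sigma2) : R := if n is m.+1 then (1 - e (iter m Defs.shift x) ^+ 2) * Pp m x else 1.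
Fixpoint ss n (x : Sigma2) : R := if n is m.+1 then ss m x + e (iter m Defs.shift x) * Pp m x else 0.

Definition Ae := Amat (fun=> 1) (fun y => 1 - e y ^+ 2) e.

Lemma Aprod_E n x : Aprod Ae n x =
  \matrix_(i < 2, j < 2) (if i == 0 :> nat then (if j == 0 :> nat then 1 else ss n x)
                          else (if j == 0 :> nat then 0 else Pp n x)).
Proof.
elim: n => [|n IH].
  apply/matrixP => i j; rewrite !mxE.
  by case: i => [[|[|//]] ?]; case: j => [[|[|//]] ?].
rewrite /= IH; apply/matrixP => i j; rewrite !mxE sum2E !mxE.
case: i => [[|[|//]] ?]; case: j => [[|[|//]] ?] /=;
  by rewrite ?mulr0 ?mul0r ?mulr1 ?mul1r ?addr0 ?add0r // addrC.
Qed.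

Hypothesis e_ge0 : forall y, 0 <= e y.
Hypothesis e_le : forall y, e y <= 2^-1.

Lemma Pp_bnd n x : 0 <= Pp n x <= 1.
Proof.
elim: n => [|n IH] /=; first by rewrite ler01 lexx.
have := e_ge0 (iter n Defs.shift x); have := e_le (iter n Defs.shift x).
case/andP: IH => h1 h2 h3 h4.
set E := e _ in h3 h4 *.
have hE : 0 <= 1 - E ^+ 2 by rewrite subr_ge0 -(expr1n _ 2) ler_pXn2r ?nnegrE //; lra.
have hE' : 1 - E ^+ 2 <= 1 by rewrite lerBlDr lerDl sqr_ge0.
by rewrite mulr_ge0 //= mulr_ile1.
Qed.

Lemma ss_ge0 n x : 0 <= ss n x.
Proof.
elim: n => [|n IH] //=.
case/andP: (Pp_bnd n x) => h1 h2.
by rewrite addr_ge0 // mulr_ge0.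
Qed.

Lemma aux_ineq (E P D : R) : 0 <= P -> P <= 1 -> 0 <= E ->
  E * P * D <= E ^+ 2 * P + D ^+ 2.
Proof.
move=> h1 h2 h3.
have h4 : 0 <= P * (E - D) ^+ 2 by rewrite mulr_ge0 ?sqr_ge0.
have h5 : 0 <= P * E ^+ 2 by rewrite mulr_ge0 ?sqr_ge0.
have h6 : P * D ^+ 2 <= D ^+ 2 by rewrite ler_piMl ?sqr_ge0.
rewrite sqrrB in h4; nra.
Qed.

Lemma ss_le n x D : ss n x * D <= (1 - Pp n x) + n%:R * D ^+ 2.
Proof.
elim: n => [|n IH] /=; first by rewrite mul0r subrr mul0r addr0.
case/andP: (Pp_bnd n x) => h1 h2.
have := aux_ineq D h1 h2 (e_ge0 (iter n Defs.shift x)).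
rewrite -natr1; nra.
Qed.

Lemma opnorm_Aprod_le n x : opnorm (Aprod Ae n x) <= 2 + ss n x.
Proof.
apply: le_trans (opnorm_le _) _.
rewrite /mxsum Aprod_E !mxE /= normr1 normr0 addr0.
case/andP: (Pp_bnd n x) => h1 h2.
rewrite !ger0_norm ?ss_ge0 //; lra.
Qed.

Lemma opnorm_Aprod_ge1 n x : 1 <= opnorm (Aprod Ae n x).
Proof. by have := opnorm_ge (Aprod Ae n x) 0; rewrite Aprod_E !mxE /= normr1. Qed.

Lemma opnorm_Aprod_ge n x : ss n x <= opnorm (Aprod Ae n x).
Proof.
have := opnorm_ge (Aprod Ae n x) 1; rewrite Aprod_E !mxE /= ger0_norm //.
exact: ss_ge0.
Qed.

End S.


Section S.
Variable R : realType.

Lemma esup_between (F : Sigma2 -> R) (a b : R) : (forall x, a <= F x <= b) ->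
  (a%:E <= ereal_sup [set (F x)%:E | x in [set: Sigma2]])%E /\
  (ereal_sup [set (F x)%:E | x in [set: Sigma2]] <= b%:E)%E.
Proof.
move=> H; split.
  apply: le_trans (ereal_sup_ubound _); last by exists (fun=> true).
  by rewrite lee_fin; case/andP: (H (fun=> true)).
by apply: ge_ereal_sup => _ [x _ <-]; rewrite lee_fin; case/andP: (H x).
Qed.

Lemma bernoulli2 (E : R) n : 0 <= E ->
  1 + n%:R * E + (n * n.-1)%:R / 2 * E ^+ 2 <= (1 + E) ^+ n.
Proof.
move=> E0; elim: n => [|n IH]; first by rewrite !mul0r expr0 !addr0.
have hn : ((n.+1 * n.+1.-1)%:R : R) = (n * n.-1)%:R + 2 * n%:R.
  by case: n {IH} => [|n] //=; rewrite ?mul0r ?addr0 // -natrM -natrD; congr (_%:R); lia.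
rewrite hn [in X in _ <= X]exprS.
have h1 : 0 <= (n * n.-1)%:R / 2 * E ^+ 3 :> R by rewrite mulr_ge0 ?exprn_ge0 // divr_ge0.
have h2 : 0 <= (1 + E) by lra.
apply: le_trans _ (ler_wpM2l h2 IH).
set c := (n * n.-1)%:R in h1 *.
have -> : (1 + E) * (1 + n%:R * E + c / 2 * E ^+ 2) =
   1 + (n%:R + 1) * E + (c + 2 * n%:R) / 2 * E ^+ 2 + c / 2 * E ^+ 3.
  by field.
by rewrite -natr1 lerDl.
Qed.


Lemma n_le_bern (E : R) : 0 < E -> exists N, forall n, (N <= n)%N ->
  n%:R + 3 <= (1 + E) ^+ n.
Proof.
move=> E0; set K := Num.truncn (8 / E ^+ 2).
have hK : 8 / E ^+ 2 < K.+1%:R.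
  by case/andP: (truncn_itv (ltW (divr_gt0 (ltr0n _ 8) (exprn_gt0 2 E0)))).
exists K.+2 => n hn.
apply: le_trans (bernoulli2 n (ltW E0)).
have hn1 : (K.+1 <= n.-1)%N by case: n hn => //= n; rewrite ltnS.
have h1 : 8 / E ^+ 2 < n.-1%:R by apply: lt_le_trans hK _; rewrite ler_nat.
have h2 : 8 < n.-1%:R * E ^+ 2 by rewrite -ltr_pdivrMr ?exprn_gt0.
have h3 : (n * n.-1)%:R / 2 * E ^+ 2 = n%:R * (n.-1%:R * E ^+ 2) / 2 :> R.
  by rewrite natrM; field.
have h4 : (1 <= n%:R :> R) by rewrite ler1n; case: n hn {hn1 h1 h2 h3}.
rewrite h3.
have h5 : 0 <= n%:R * E :> R by rewrite mulr_ge0 // ltW.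
have h6 : n%:R * 8 <= n%:R * (n.-1%:R * E ^+ 2) :> R by rewrite ler_wpM2l // ltW.
lra.
Qed.

Variable e : Sigma2 -> R.
Hypothesis e_ge0 : forall y, 0 <= e y.
Hypothesis e_le : forall y, e y <= 2^-1.

Lemma opnorm_ge0' n x : 0 <= opnorm (Aprod (Ae e) n x).
Proof. exact: le_trans ler01 (opnorm_Aprod_ge1 _ _ _). Qed.

Lemma lim1 : (fun n : nat => ereal_sup
   [set ((opnorm (Aprod (Ae e) n x)) `^ (n%:R^-1))%:E | x in [set: Sigma2]])
      @ \oo --> (1%:E : \bar R).
Proof.
apply: cvg_sandwich => E E0.
have [N HN] := n_le_bern E0.
exists N.+1 => n hn.
have [] := @esup_between (fun x => (opnorm (Aprod (Ae e) n x)) `^ (n%:R^-1)) 1 (1 + E).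
- move=> x; apply/andP; split.
    apply: (@le_trans _ _ (1 `^ (n%:R^-1))); first by rewrite powR1.
    apply: ge0_ler_powR; rewrite ?invr_ge0 ?nnegrE ?ler01 ?opnorm_ge0' //. exact: opnorm_Aprod_ge1.
  have hn0 : (n%:R : R) != 0 by rewrite pnatr_eq0; case: n hn.
  have hop : opnorm (Aprod (Ae e) n x) <= (1 + E) `^ n%:R.
    rewrite powR_mulrn; last by lra.
    apply: le_trans (HN n (ltnW hn)).
    apply: le_trans (opnorm_Aprod_le e_ge0 e_le n x) _.
    have := ss_le e_ge0 e_le n x 1; rewrite mulr1 expr1n mulr1.
    case/andP: (Pp_bnd e_ge0 e_le n x) => p1 p2; lra.
  apply: le_trans (ge0_ler_powR _ _ _ hop) _; rewrite ?invr_ge0 ?nnegrE ?opnorm_ge0' ?powR_ge0 //.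
  by rewrite -powRrM mulfV // powRr1 //; lra.
- move=> h1 h2; split=> //; apply: (le_trans _ h1); rewrite lee_fin; lra.
Qed.

Lemma lim2 : (fun n : nat => ereal_sup
   [set (opnorm (Aprod (Ae e) n x) / n%:R)%:E | x in [set: Sigma2]])
      @ \oo --> (0%:E : \bar R).
Proof.
apply: cvg_sandwich => E E0.
set D := E / 2.
have D0 : 0 < D by rewrite divr_gt0.
have Di : 0 < D^-1 by rewrite invr_gt0.
set K := Num.truncn ((2 + D^-1) / D).
have hK : (2 + D^-1) / D < K.+1%:R.
  by case/andP: (truncn_itv (ltW (divr_gt0 (addr_gt0 (ltr0n _ 2) Di) D0))).
exists K.+1 => n hn.
have n0 : (0 < n%:R :> R) by rewrite ltr0n; case: n hn.
have [] := @esup_between (fun x => opnorm (Aprod (Ae e) n x) / n%:R) 0 E.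
- move=> x; apply/andP; split; first by rewrite divr_ge0 ?opnorm_ge0' ?ltW.
  rewrite ler_pdivrMr //.
  have hs : ss e n x <= D^-1 + n%:R * D.
    have := ss_le e_ge0 e_le n x D.
    case/andP: (Pp_bnd e_ge0 e_le n x) => p1 p2 h.
    have : ss e n x <= (1 + n%:R * D ^+ 2) / D.
      by rewrite ler_pdivlMr //; lra.
    have -> : (1 + n%:R * D ^+ 2) / D = D^-1 + n%:R * D by field; rewrite gt_eqF.
    done.
  have hKn : (2 + D^-1) / D < n%:R by apply: lt_le_trans hK _; rewrite ler_nat.
  rewrite ltr_pdivrMr // in hKn.
  apply: le_trans (opnorm_Aprod_le e_ge0 e_le n x) _.
  have -> : E = 2 * D by rewrite /D; field.
  lra.
- move=> /= h1 h2; split; [apply: le_trans _ h1 | apply: le_trans h2 _]; rewrite lee_fin; lra.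
Qed.

End S.




Definition wN (N : nat) (k : int) : bool := ~~ ((N.+1)%:Z %| k)%Z.
Definition zz (N j : nat) : Sigma2 := fun k => wN N (k + j%:Z).

Lemma zz_shift N j : Defs.shift (zz N j) = zz N j.+1.
Proof. by apply/funext => k; rewrite /Defs.shift /zz; congr (wN N _); lia. Qed.

Lemma iter_zz N j n : iter n Defs.shift (zz N j) = zz N (j + n).
Proof. by elim: n => [|n IH] /=; rewrite ?addn0 // IH zz_shift addnS. Qed.

Lemma zz_mod N j : zz N j = zz N (j %% N.+1).
Proof.
apply/funext => k; rewrite /zz /wN; congr (~~ _).
rewrite {1}(divn_eq j N.+1) PoszD addrA addrAC PoszM.
by rewrite rpredDr // dvdz_mull // dvdzz.
Qed.

Lemma zz_false N i (k : nat) : (N.+1 %| k + i)%N -> zz N i k%:Z = false.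
Proof. by move=> h; rewrite /zz /wN -PoszD dvdzE /= h. Qed.

Lemma disagree M N i j : (M < N)%N ->
  exists k : nat, (k <= 2 * M + 2)%N /\ zz N j k%:Z <> zz M i k%:Z.
Proof.
move=> MN.
set r := (i %% M.+1)%N.
have rlt : (r < M.+1)%N by rewrite ltn_mod.
set k0 := (M.+1 - r)%N.
have h0 : (M.+1 %| k0 + i)%N.
  rewrite /k0 {1}(divn_eq i M.+1) -/r.
  have -> : (M.+1 - r + (i %/ M.+1 * M.+1 + r) = M.+1 + i %/ M.+1 * M.+1)%N by lia.
  by rewrite dvdn_add // dvdn_mull.
have h1 : (M.+1 %| (k0 + M.+1) + i)%N.
  by rewrite addnAC dvdn_add.
have f0 := zz_false h0; have f1 := zz_false h1.
case E0: (zz N j k0%:Z).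
  exists k0; split; first lia.
  by rewrite E0 f0.
case E1: (zz N j (k0 + M.+1)%:Z).
  exists (k0 + M.+1)%N; split; first lia.
  by rewrite E1 f1.
exfalso.
move: E0 E1; rewrite /zz /wN -!PoszD !dvdzE /= => /negbFE a0 /negbFE a1.
have : (N.+1 %| M.+1)%N.
  by move: a1; rewrite addnAC (dvdn_addr _ a0).
by move/dvdn_leq => /(_ isT); lia.
Qed.


Section M.
Variable R : realType.
Variable d : Sigma2 -> Sigma2 -> R.
Hypothesis HD : generates_product_topology d.

Lemma cyl_lb y W : exists2 c : R, 0 < c & forall z,
  (exists k : nat, (k <= W)%N /\ z k%:Z <> y k%:Z) -> c <= d y z.
Proof.
case: HD => _ Hop.
pose U := fun z : Sigma2 => forall k : int, `|k| <= W%:Z -> z k = y k.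
have pU : prod_open U.
  move=> x Ux; exists W => z hz k hk; rewrite hz //; exact: Ux.
have [c c0 Hc] := (proj2 (Hop U)) pU y (fun _ _ => erefl).
exists c => // z [k [kW hk]].
rewrite leNgt; apply/negP => /Hc Uz.
apply: hk; apply: Uz.
by rewrite ger0_norm // lez_nat.
Qed.

Lemma cM M : exists2 c : R, 0 < c & forall i z,
  (exists k : nat, (k <= 2 * M + 2)%N /\ z k%:Z <> zz M i k%:Z) -> c <= d (zz M i) z.
Proof.
have H : forall I : nat, exists2 c : R, 0 < c & forall i, (i <= I)%N -> forall z,
  (exists k : nat, (k <= 2 * M + 2)%N /\ z k%:Z <> zz M i k%:Z) -> c <= d (zz M i) z.
  elim=> [|I [c c0 Hc]].
    have [c c0 Hc] := cyl_lb (zz M 0) (2 * M + 2).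
    by exists c => // i; rewrite leqn0 => /eqP ->.
  have [c' c0' Hc'] := cyl_lb (zz M I.+1) (2 * M + 2).
  exists (Num.min c c'); first by rewrite lt_min c0 c0'.
  move=> i; rewrite leq_eqVlt => /orP [/eqP ->|hi] z hz.
    by rewrite ge_min (Hc' _ hz) orbT.
  by rewrite ge_min (Hc _ _ _ hz).
have [c c0 Hc] := H M.
exists c => // i z; rewrite (zz_mod M i); apply: Hc.
by rewrite -ltnS ltn_mod.
Qed.

End M.


Section E.
Variable R : realType.
Variable d : Sigma2 -> Sigma2 -> R.
Hypothesis HM : is_metric d.
Variable c : nat -> R.
Hypothesis c_pos : forall M, 0 < c M.
Hypothesis c_prop : forall M i z,
  (exists k : nat, (k <= 2 * M + 2)%N /\ z k%:Z <> zz M i k%:Z) -> c M <= d (zz M i) z.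

Lemma d_ge0 x y : 0 <= d x y. Proof. by case: HM. Qed.
Lemma d_xx x : d x x = 0. Proof. by case: HM => _ [H _]; apply/H. Qed.
Lemma d_sym x y : d x y = d y x. Proof. by case: HM => _ [_ [H _]]. Qed.
Lemma d_tri x y z : d x z <= d x y + d y z. Proof. by case: HM => _ [_ [_ H]]. Qed.

Fixpoint dl (M : nat) : R :=
  if M is M'.+1 then Num.min (dl M') (Num.min (c M) (M.+2%:R^-1))
  else Num.min (c 0%N) (2^-1).

Lemma dl_gt0 M : 0 < dl M.
Proof.
elim: M => [|M IH] /=; first by rewrite lt_min c_pos invr_gt0 ltr0n.
by rewrite !lt_min IH c_pos invr_gt0 ltr0n.
Qed.

Lemma dl_le_c M : dl M <= c M.
Proof. by case: M => [|M] /=; rewrite !ge_min ?lexx // orbT. Qed.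

Lemma dl_le_inv M : dl M <= M.+2%:R^-1.
Proof. by case: M => [|M] /=; rewrite !ge_min ?lexx ?orbT. Qed.

Lemma dl_mono M N : (M <= N)%N -> dl N <= dl M.
Proof.
elim: N => [|N IH]; first by rewrite leqn0 => /eqP ->.
rewrite leq_eqVlt => /orP [/eqP ->|hMN]; first by [].
by apply: le_trans (IH hMN); rewrite /= ge_min lexx.
Qed.

Lemma dl_le_half M : dl M <= 2^-1.
Proof. by apply: le_trans (dl_mono (leq0n M)) _; rewrite /= ge_min lexx orbT. Qed.

Definition Sset (y : Sigma2) : set R :=
  [set r | exists N j, r = Num.max 0 (dl N - d y (zz N j))].

Definition eps (y : Sigma2) : R := sup (Sset y).

Lemma Sset_ub y : ubound (Sset y) (2^-1).
Proof.
move=> _ [N [j ->]]; rewrite ge_max invr_ge0 ler0n /=.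
by apply: le_trans (dl_le_half N); rewrite lerBlDr lerDl d_ge0.
Qed.

Lemma Sset_has y : has_sup (Sset y).
Proof. by split; [exists (Num.max 0 (dl 0 - d y (zz 0 0))), 0%N, 0%N | exists 2^-1; exact: Sset_ub]. Qed.

Lemma Sset_le y r : Sset y r -> r <= eps y.
Proof. exact: sup_upper_bound (Sset_has y) r. Qed.

Lemma eps_ge0 y : 0 <= eps y.
Proof. by apply: le_trans (Sset_le (ex_intro _ 0%N (ex_intro _ 0%N erefl))); rewrite le_max lexx. Qed.

Lemma eps_le y : eps y <= 2^-1.
Proof. by apply: ge_sup; [case: (Sset_has y) | exact: Sset_ub]. Qed.

Lemma eps_lip1 y y' : eps y <= eps y' + d y y'.
Proof.
apply: ge_sup; first by case: (Sset_has y).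
move=> _ [N [j ->]].
have h := Sset_le (ex_intro _ N (ex_intro _ j erefl) : Sset y' (Num.max 0 (dl N - d y' (zz N j)))).
have t := d_tri y' y (zz N j); rewrite (d_sym y' y) in t.
have hy := d_ge0 y y'.
apply: le_trans (lerD h (lexx (d y y'))).
rewrite ge_max; apply/andP; split.
  by apply: addr_ge0 => //; rewrite le_max lexx.
have : dl N - d y (zz N j) <= (dl N - d y' (zz N j)) + d y y' by lra.
move=> h2; apply: le_trans h2 _; rewrite lerD2r le_max lexx orbT //.
Qed.

Lemma eps_lip y y' : `|eps y - eps y'| <= d y y'.
Proof.
have h1 := eps_lip1 y y'; have h2 := eps_lip1 y' y; rewrite d_sym in h2.
rewrite ler_norml; apply/andP; split; lra.
Qed.

Lemma eps_zz N j : eps (zz N j) = dl N.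
Proof.
apply/le_anti/andP; split; last first.
  apply: Sset_le; exists N, j; rewrite d_xx subr0.
  by apply/esym/max_idPr; exact: ltW (dl_gt0 N).
apply: ge_sup; first by case: (Sset_has (zz N j)).
move=> _ [M [i ->]]; rewrite ge_max (ltW (dl_gt0 N)) /=.
case: (ltnP M N) => MN.
  have hk := disagree i j MN.
  have := c_prop hk; rewrite d_sym => hc.
  have := dl_le_c M; have := dl_gt0 N; lra.
have := dl_mono MN; have := d_ge0 (zz N j) (zz M i); lra.
Qed.

End E.


Section U.
Variable R : realType.

Lemma const_orbit (e : Sigma2 -> R) x (D : R) :
  (forall k, e (iter k Defs.shift x) = D) -> 0 <= D -> D <= 2^-1 ->
  forall n, 1 - n%:R * D ^+ 2 <= Pp e n x /\
            n%:R * D - n%:R ^+ 2 * D ^+ 3 <= ss e n x.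
Proof.
move=> He D0 D1; elim=> [|n [IH1 IH2]] /=.
  by rewrite !mul0r subr0 expr0n /= mul0r subr0 lexx.
rewrite He.
have hD : 0 <= 1 - D ^+ 2.
  by rewrite subr_ge0 -(expr1n _ 2) ler_pXn2r ?nnegrE //; lra.
have hD3 : 0 <= D ^+ 3 by rewrite exprn_ge0.
have hD4 : 0 <= n%:R * D ^+ 4 :> R by rewrite mulr_ge0 ?exprn_ge0.
split.
  apply: le_trans (ler_wpM2l hD IH1).
  have -> : (1 - D ^+ 2) * (1 - n%:R * D ^+ 2) = 1 - n.+1%:R * D ^+ 2 + n%:R * D ^+ 4.
    by rewrite -natr1; ring.
  by rewrite lerDl.
have h := ler_wpM2l D0 IH1.
have e1 : n.+1%:R * D - n.+1%:R ^+ 2 * D ^+ 3 + n.+1%:R * D ^+ 3 =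
  (n%:R * D - n%:R ^+ 2 * D ^+ 3) + D * (1 - n%:R * D ^+ 2).
  by rewrite -natr1; ring.
have h3 : 0 <= n.+1%:R * D ^+ 3 :> R by rewrite mulr_ge0.
lra.
Qed.

End U.


Section V.
Variable R : realType.
Variable d : Sigma2 -> Sigma2 -> R.
Hypothesis HM : is_metric d.
Variable c : nat -> R.
Hypothesis c_pos : forall M, 0 < c M.
Hypothesis c_prop : forall M i z,
  (exists k : nat, (k <= 2 * M + 2)%N /\ z k%:Z <> zz M i k%:Z) -> c M <= d (zz M i) z.

Lemma unbounded (B : R) : 0 < B -> exists n x, (0 < n)%N /\
   B <= opnorm (Aprod (Ae (eps d c)) n x).
Proof.
move=> B0.
set N := Num.truncn (4 * B).
have hN : 4 * B < N.+1%:R.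
  by case/andP: (truncn_itv (ltW (mulr_gt0 (ltr0n _ 4) B0))).
set D := dl c N.
have D0 : 0 < D := dl_gt0 c_pos N.
have D1 : D <= 2^-1 := dl_le_half c N.
have DN : D * N.+2%:R <= 1.
  by rewrite -ler_pdivlMr ?ltr0n // div1r; exact: dl_le_inv c N.
have hconst : forall k, eps d c (iter k Defs.shift (zz N 0)) = D.
  by move=> k; rewrite iter_zz (eps_zz HM c_pos c_prop).
have D2 : 0 < 2 * D ^+ 2 by rewrite mulr_gt0 ?exprn_gt0.
set t := (2 * D ^+ 2)^-1.
have t0 : 0 <= t by rewrite invr_ge0 ltW.
set n := Num.truncn t.
have [ht1 ht2] : n%:R <= t /\ t < n.+1%:R by case/andP: (truncn_itv t0).
have tD : t * (2 * D ^+ 2) = 1 by rewrite mulVf // gt_eqF.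
have k1 : n%:R * (2 * D ^+ 2) <= 1 by rewrite -[X in _ <= X]tD; apply: ler_wpM2r => //; exact: ltW.
have k2 : 1 <= n.+1%:R * (2 * D ^+ 2) by rewrite -[X in X <= _]tD; apply: ler_wpM2r => //; exact: ltW.
have DD : D * D <= D * 2^-1 by rewrite ler_wpM2l // ltW.
have n0 : (0 < n)%N.
  rewrite lt0n; apply/negP => /eqP n0.
  move: k2; rewrite n0 expr2; lra.
have [_ hs] := const_orbit hconst (ltW D0) D1 n.
have hop := opnorm_Aprod_ge (eps_ge0 HM c) (eps_le HM c) n (zz N 0).
exists n, (zz N 0); split => //.
apply: le_trans hop; apply: le_trans hs.
set a := (n%:R : R) in k1 k2 *.
have a0 : 0 <= a by rewrite ler0n.
have e1 : a * D - a ^+ 2 * D ^+ 3 = a * D * (1 - a * D ^+ 2) by ring.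
have h1 : a * D * 2^-1 <= a * D * (1 - a * D ^+ 2).
  apply: ler_wpM2l; first by rewrite mulr_ge0 // ltW.
  lra.
have e2 : n.+1%:R * (2 * D ^+ 2) = 2 * (D * (a * D)) + 2 * (D * D).
  by rewrite -natr1 /a; ring.
have e3 : D * N.+2%:R = D * N.+1%:R + D by rewrite -(@natr1 R N.+1); ring.
have h2 : D * N.+1%:R <= D * (2 * (a * D)).
  by rewrite e2 in k2; rewrite e3 in DN; lra.
rewrite ler_pM2l // in h2.
rewrite e1; lra.
Qed.

End V.

Unset Implicit Arguments. Set Strict Implicit.

Theorem theorem2 (R : realType) (d : Sigma2 -> Sigma2 -> R) :
  generates_product_topology d ->
  exists (f g phi : Sigma2 -> R),
    (forall x : Sigma2, 0 < f x /\ f x <= 1) /\ (forall x : Sigma2, 0 < g x /\ g x <= 1) /\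
    lipschitz_wrt d f /\ lipschitz_wrt d g /\ lipschitz_wrt d phi /\
    let A := Amat f g phi in
    (fun n : nat => ereal_sup
       [set ((opnorm (Aprod A n x)) `^ (n%:R^-1))%:E | x in [set: Sigma2]])
      @ \oo --> (1%:E : \bar R) /\
    (fun n : nat => ereal_sup
       [set (opnorm (Aprod A n x) / n%:R)%:E | x in [set: Sigma2]])
      @ \oo --> (0%:E : \bar R) /\
    ereal_sup [set y : \bar R | exists (n : nat) (x : Sigma2),
                 (0 < n)%N /\ y = (opnorm (Aprod A n x))%:E] = +oo%E.
Proof.
move=> HD; have HM := HD.1.
have : forall M, exists c : R, 0 < c /\ (forall i z,
  (exists k : nat, (k <= 2 * M + 2)%N /\ z k%:Z <> zz M i k%:Z) -> c <= d (zz M i) z).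
  by move=> M; have [c c0 h] := cM HD M; exists c.
case/choice => c Hc.
have c_pos : forall M, 0 < c M by move=> M; case: (Hc M).
have c_prop : forall M i z,
  (exists k : nat, (k <= 2 * M + 2)%N /\ z k%:Z <> zz M i k%:Z) -> c M <= d (zz M i) z.
  by move=> M; case: (Hc M).
have e0 := eps_ge0 HM c; have e1 := eps_le HM c.
set e := eps d c in e0 e1 *.
exists (fun=> 1), (fun y => 1 - e y ^+ 2), e.
split; first by move=> _; rewrite ltr01 lexx.
split.
  move=> x; have := e0 x; have := e1 x => h1 h2.
  have h3 : e x ^+ 2 <= e x * 2^-1 by rewrite expr2; apply: ler_wpM2l.
  have h4 := sqr_ge0 (e x); split; lra.
split.
  by exists 0 => x y; rewrite subrr normr0 mul0r.
split.
  exists 1 => x y; rewrite mul1r.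
  have -> : 1 - e x ^+ 2 - (1 - e y ^+ 2) = (e y - e x) * (e y + e x) by ring.
  rewrite normrM distrC.
  apply: le_trans (eps_lip HM c x y).
  rewrite ler_piMr ?normr_ge0 // ger0_norm ?addr_ge0 //.
  by have := e1 x; have := e1 y; lra.
split.
  by exists 1 => x y; rewrite mul1r; exact: eps_lip.
move=> A.
split; first exact: (lim1 e0 e1).
split; first exact: (lim2 e0 e1).
apply/eqyP => B B0.
have [n [x [n0 hB]]] := unbounded HM c_pos c_prop B0.
apply: le_trans (ereal_sup_ubound _); last by exists n, x.
by rewrite lee_fin.
Qed.
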